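(* Let $\mathcal C$ be a regular category and let $f\colon X\to Y$ be a level morphism of inverse systems in $\mathcal C$ with common index category $\mathcal I$ (so $f$ consists of morphisms $f_i\colon X_i\to Y_i$, $i\in\mathcal I$, commuting with the transition maps). For each $i$ let $X_i\to \operatorname{Im}(f_i)\to Y_i$ be the image decomposition of $f_i$ in $\mathcal C$. Then $$X\to \varprojlim_{i\in\mathcal I}\operatorname{Im}(f_i)\to Y$$ is the image decomposition of $f$ in $\operatorname{Pro}(\mathcal C)$, where $\varprojlim_{i\in\mathcal I}\operatorname{Im}(f_i)$ denotes the inverse system $i\mapsto \operatorname{Im}(f_i)$ (with transition maps induced by functoriality of the image decomposition) and the two morphisms are the level morphisms formed by the $X_i\to\operatorname{Im}(f_i)$ and $\operatorname{Im}(f_i)\to Y_i$. In particular, if every $f_i$ is a regular epimorphism in $\mathcal C$, then $f$ is a regular epimorphism in $\operatorname{Pro}(\mathcal C)$.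
   Context: For a category $\mathcal C$, $\operatorname{Pro}(\mathcal C)$ is its pro-completion: objects are inverse systems, i.e. functors $X\colon \mathcal I_X^{op}\to\mathcal C$ with $\mathcal I_X$ a small filtered category (written $i\mapsto X_i$), and $\operatorname{Hom}_{\operatorname{Pro}(\mathcal C)}(X,Y)=\varprojlim_{j\in\mathcal I_Y}\varinjlim_{i\in\mathcal I_X}\mathcal C(X_i,Y_j)$. A level morphism between inverse systems with the same index category $\mathcal I$ is a natural transformation, i.e. a family $f_i\colon X_i\to Y_i$ commuting with transition maps. A regular category is a finitely complete category in which kernel pairs have coequalizers and regular epimorphisms are stable under pullback; in such a category every morphism factors uniquely (up to unique isomorphism, functorially) as a regular epimorphism followed by a monomorphism (its image decomposition). *)

(* Defs.v *)
Set Implicit Arguments.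
Unset Strict Implicit.

Record Category : Type := {
  Ob :> Type;
  Hom : Ob -> Ob -> Type;
  idm : forall a, Hom a a;
  comp : forall x y z, Hom y z -> Hom x y -> Hom x z;
  comp_id_l : forall a b (f : Hom a b), comp (idm b) f = f;
  comp_id_r : forall a b (f : Hom a b), comp f (idm a) = f;
  comp_assoc : forall a b c0 d (f : Hom a b) (g : Hom b c0) (h : Hom c0 d),
      comp h (comp g f) = comp (comp h g) f
}.
Arguments Hom {c} _ _.
Arguments idm {c} _.
Arguments comp {c x y z} _ _.

Section Cat.
Variable C : Category.

Definition is_mono {a b : C} (m : Hom a b) : Prop :=
  forall w (u v : Hom w a), comp m u = comp m v -> u = v.

Definition is_coequalizer {a b q : C} (u v : Hom a b) (e : Hom b q) : Prop :=
  comp e u = comp e v /\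
  forall z (g : Hom b z), comp g u = comp g v ->
    exists h : Hom q z, comp h e = g /\ forall h' : Hom q z, comp h' e = g -> h' = h.

Definition is_regular_epi {b q : C} (e : Hom b q) : Prop :=
  exists (a : C) (u v : Hom a b), is_coequalizer u v e.

Definition is_terminal (t : C) : Prop :=
  forall a : C, exists h : Hom a t, forall h' : Hom a t, h' = h.

Definition is_pullback {A B Z P : C} (f : Hom A Z) (g : Hom B Z)
    (p1 : Hom P A) (p2 : Hom P B) : Prop :=
  comp f p1 = comp g p2 /\
  forall W (x : Hom W A) (y : Hom W B), comp f x = comp g y ->
    exists h : Hom W P, (comp p1 h = x /\ comp p2 h = y) /\
      forall h' : Hom W P, comp p1 h' = x -> comp p2 h' = y -> h' = h.

Definition finitely_complete : Prop :=
  (exists t : C, is_terminal t) /\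
  forall (A B Z : C) (f : Hom A Z) (g : Hom B Z),
    exists (P : C) (p1 : Hom P A) (p2 : Hom P B), is_pullback f g p1 p2.

Definition is_regular_category : Prop :=
  finitely_complete /\
  (forall (A Z P : C) (f : Hom A Z) (p1 p2 : Hom P A),
      is_pullback f f p1 p2 -> exists (Q : C) (q : Hom A Q), is_coequalizer p1 p2 q) /\
  (forall (A B Z P : C) (e : Hom A Z) (g : Hom B Z) (p1 : Hom P B) (p2 : Hom P A),
      is_regular_epi e -> is_pullback g e p1 p2 -> is_regular_epi p1).
End Cat.

Definition is_filtered (I : Category) : Prop :=
  (exists i : I, True) /\
  (forall i j : I, exists (k : I) (a : Hom i k) (b : Hom j k), True) /\
  (forall (i j : I) (u v : Hom i j), exists (k : I) (w : Hom j k), comp w u = comp w v).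

Record InvSys (C : Category) (I : Category) := {
  sobj :> I -> C;
  smap : forall i i' : I, Hom i i' -> Hom (sobj i') (sobj i);
  smap_id : forall i : I, smap (idm i) = idm (sobj i);
  smap_comp : forall (i i' i'' : I) (a : Hom i i') (b : Hom i' i''),
      smap (comp b a) = comp (smap a) (smap b)
}.
Arguments smap {C I} _ {i i'} _.

Definition is_level {C I : Category} (X Y : InvSys C I)
    (f : forall i : I, Hom (X i) (Y i)) : Prop :=
  forall (i i' : I) (a : Hom i i'), comp (smap Y a) (f i') = comp (f i) (smap X a).

Record ProObj (C : Category) := {
  pI : Category;
  pfilt : is_filtered pI;
  psys : InvSys C pI
}.
Arguments pI {C} _.
Arguments psys {C} _.

Section Pro.
Variable C : Category.

(* representatives of elements of colim_{i} C(X_i, Z) *)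
Definition colim_rep (X : ProObj C) (Z : C) : Type :=
  { i : pI X & Hom (psys X i) Z }.

Definition colim_eq (X : ProObj C) (Z : C) (p q : colim_rep X Z) : Prop :=
  exists (k : pI X) (a : Hom (projT1 p) k) (b : Hom (projT1 q) k),
    comp (projT2 p) (smap (psys X) a) = comp (projT2 q) (smap (psys X) b).

(* raw pro-morphism: a choice of representative for each j *)
Definition ProHom (X Y : ProObj C) : Type :=
  forall j : pI Y, colim_rep X (psys Y j).

(* compatibility: the family defines an element of lim_j colim_i C(X_i,Y_j) *)
Definition is_pro {X Y : ProObj C} (phi : ProHom X Y) : Prop :=
  forall (j j' : pI Y) (b : Hom j j'),
    colim_eq (existT _ (projT1 (phi j')) (comp (smap (psys Y) b) (projT2 (phi j'))))
             (phi j).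

Definition pro_eq {X Y : ProObj C} (phi psi : ProHom X Y) : Prop :=
  forall j, colim_eq (phi j) (psi j).

Definition pro_comp {X Y Z : ProObj C} (psi : ProHom Y Z) (phi : ProHom X Y)
  : ProHom X Z :=
  fun k => existT _ (projT1 (phi (projT1 (psi k))))
                    (comp (projT2 (psi k)) (projT2 (phi (projT1 (psi k))))).

Definition pro_is_mono {X Y : ProObj C} (m : ProHom X Y) : Prop :=
  is_pro m /\
  forall (W : ProObj C) (u v : ProHom W X), is_pro u -> is_pro v ->
    pro_eq (pro_comp m u) (pro_comp m v) -> pro_eq u v.

Definition pro_is_coequalizer {A B Q : ProObj C} (u v : ProHom A B) (e : ProHom B Q)
  : Prop :=
  pro_eq (pro_comp e u) (pro_comp e v) /\
  forall (Z : ProObj C) (g : ProHom B Z), is_pro g ->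
    pro_eq (pro_comp g u) (pro_comp g v) ->
    exists h : ProHom Q Z, is_pro h /\ pro_eq (pro_comp h e) g /\
      forall h' : ProHom Q Z, is_pro h' -> pro_eq (pro_comp h' e) g -> pro_eq h' h.

Definition pro_is_regular_epi {B Q : ProObj C} (e : ProHom B Q) : Prop :=
  is_pro e /\
  exists (A : ProObj C) (u v : ProHom A B), is_pro u /\ is_pro v /\
    pro_is_coequalizer u v e.

Definition mkPro {I : Category} (HI : is_filtered I) (X : InvSys C I) : ProObj C :=
  {| pI := I; pfilt := HI; psys := X |}.

Definition level_pro {I : Category} (HI : is_filtered I) (X Y : InvSys C I)
    (f : forall i : I, Hom (X i) (Y i)) : ProHom (mkPro HI X) (mkPro HI Y) :=
  fun j => existT (fun i : I => Hom (X i) (Y j)) j (f j).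
End Pro.
Arguments is_level {C I} X Y f.
Arguments level_pro {C I} HI X Y f _.

(* Main.v *)
Require Import Defs.
From Stdlib Require Import IndefiniteDescription.
Set Implicit Arguments.
Unset Strict Implicit.

Ltac rassoc := repeat rewrite <- comp_assoc.

Lemma coeq_epi (C:Category) (a b q : C) (u v : Hom a b) (e : Hom b q) :
  is_coequalizer u v e -> forall z (x y : Hom q z), comp x e = comp y e -> x = y.
Proof.
  intros [He Hu] z x y Hxy.
  destruct (Hu z (comp x e)) as [h [_ Hh]].
  { rassoc. rewrite He. reflexivity. }
  rewrite (Hh x eq_refl), (Hh y (eq_sym Hxy)). reflexivity.
Qed.

Lemma regepi_kp (C:Category) (A Z P : C) (e : Hom A Z) (p1 p2 : Hom P A) :
  is_regular_epi e -> is_pullback e e p1 p2 -> is_coequalizer p1 p2 e.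
Proof.
  intros [W [u [v [Heq Hu]]]] [Hp Hpu].
  split; [exact Hp|].
  intros z g Hg.
  apply Hu.
  destruct (Hpu W u v Heq) as [t [[Ht1 Ht2] _]].
  rewrite <- Ht1, <- Ht2. rewrite !comp_assoc, Hg. reflexivity.
Qed.

Lemma colim_eq_refl C (X : ProObj C) Z (p : colim_rep X Z) : colim_eq p p.
Proof. exists (projT1 p), (idm _), (idm _). reflexivity. Qed.

Lemma colim_eq_sym C (X : ProObj C) Z (p q : colim_rep X Z) : colim_eq p q -> colim_eq q p.
Proof. intros [k [a [b H]]]. exists k, b, a. symmetry; exact H. Qed.

Lemma colim_eq_trans C (X : ProObj C) Z (p q r : colim_rep X Z) :
  colim_eq p q -> colim_eq q r -> colim_eq p r.
Proof.
  intros [k1 [a1 [b1 H1]]] [k2 [a2 [b2 H2]]].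
  destruct (pfilt X) as [_ [Hd He]].
  destruct (Hd k1 k2) as [k3 [c1 [c2 _]]].
  destruct (He _ _ (comp c1 b1) (comp c2 a2)) as [k4 [w Hw]].
  exists k4, (comp w (comp c1 a1)), (comp w (comp c2 b2)).
  transitivity (comp (comp (projT2 q) (smap (psys X) b1)) (comp (smap (psys X) c1) (smap (psys X) w))).
  { rewrite <- H1. rewrite !smap_comp. rassoc. reflexivity. }
  transitivity (comp (projT2 q) (smap (psys X) (comp w (comp c1 b1)))).
  { rewrite !smap_comp. rassoc. reflexivity. }
  rewrite Hw.
  transitivity (comp (comp (projT2 q) (smap (psys X) a2)) (comp (smap (psys X) c2) (smap (psys X) w))).
  { rewrite !smap_comp. rassoc. reflexivity. }
  rewrite H2. rewrite !smap_comp. rassoc. reflexivity.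
Qed.

Lemma colim_eq_equalize C (X : ProObj C) Z (i : pI X) (x y : Hom (psys X i) Z) :
  colim_eq (existT _ i x) (existT _ i y) ->
  exists (k : pI X) (c : Hom i k), comp x (smap (psys X) c) = comp y (smap (psys X) c).
Proof.
  intros [k [a [b H]]]. cbn in *.
  destruct (pfilt X) as [_ [_ He]].
  destruct (He _ _ a b) as [k' [w Hw]].
  exists k', (comp w a).
  rewrite Hw at 2. rewrite !smap_comp. rewrite !comp_assoc, H. reflexivity.
Qed.

Lemma colim_eq_smap C (X : ProObj C) Z (i k : pI X) (c : Hom i k) (x : Hom (psys X i) Z) :
  colim_eq (existT _ k (comp x (smap (psys X) c))) (existT _ i x).
Proof.
  exists k, (idm k), c. cbn. rewrite smap_id, comp_id_r. reflexivity.
Qed.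

Lemma colim_eq_post C (X : ProObj C) Z Z' (z : Hom Z Z') (p q : colim_rep X Z) :
  colim_eq p q ->
  colim_eq (existT (fun i => Hom (psys X i) Z') (projT1 p) (comp z (projT2 p)))
           (existT (fun i => Hom (psys X i) Z') (projT1 q) (comp z (projT2 q))).
Proof.
  intros [k [a [b H]]]. exists k, a, b. cbn. rassoc. rewrite H. reflexivity.
Qed.

Lemma colim_eq_of_eq C (X : ProObj C) Z (k : pI X) (x y : Hom (psys X k) Z) :
  x = y -> colim_eq (existT (fun i => Hom (psys X i) Z) k x) (existT (fun i => Hom (psys X i) Z) k y).
Proof. intros ->. apply colim_eq_refl. Qed.

Lemma level_is_pro C I (HI : is_filtered I) (X Y : InvSys C I) f :
  is_level X Y f -> is_pro (level_pro HI X Y f).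
Proof.
  intros Hf j j' b. unfold level_pro; cbn.
  exists j', (idm j'), b. cbn. rewrite smap_id, comp_id_r. apply Hf.
Qed.

Lemma level_mono C I (HI : is_filtered I) (X Y : InvSys C I) m :
  is_level X Y m -> (forall i, is_mono (m i)) -> pro_is_mono (level_pro HI X Y m).
Proof.
  intros Hl Hm. split; [apply level_is_pro; exact Hl|].
  intros W u v _ _ H j. specialize (H j). unfold pro_comp, level_pro in H; cbn in H.
  destruct (u j) as [i x], (v j) as [i' y]; cbn in *.
  destruct H as [k [a [b H]]]. exists k, a, b. cbn in *. apply (Hm j).
  rewrite !comp_assoc. exact H.
Qed.
Unset Implicit Arguments.

Definition choose_pb {C} (HC : is_regular_category C) {A Z : C} (f : Hom A Z) :
  {P : C & {p1 : Hom P A & {p2 : Hom P A | is_pullback f f p1 p2}}}.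
Proof.
  destruct (constructive_indefinite_description _ (proj2 (proj1 HC) A A Z f f)) as [P HP].
  destruct (constructive_indefinite_description _ HP) as [p1 Hp1].
  destruct (constructive_indefinite_description _ Hp1) as [p2 Hp2].
  exact (existT _ P (existT _ p1 (exist _ p2 Hp2))).
Defined.

Definition kpO {C} HC {I} (X Q : InvSys C I) (e : forall i, Hom (X i) (Q i)) (i : I) : C :=
  projT1 (choose_pb HC (e i)).
Definition kp1 {C} HC {I} (X Q : InvSys C I) e i : Hom (kpO HC X Q e i) (X i) :=
  projT1 (projT2 (choose_pb HC (e i))).
Definition kp2 {C} HC {I} (X Q : InvSys C I) e i : Hom (kpO HC X Q e i) (X i) :=
  proj1_sig (projT2 (projT2 (choose_pb HC (e i)))).
Lemma kp_pb {C} HC {I} (X Q : InvSys C I) e i :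
  is_pullback (e i) (e i) (kp1 HC X Q e i) (kp2 HC X Q e i).
Proof. exact (proj2_sig (projT2 (projT2 (choose_pb HC (e i))))). Qed.

Lemma kp_comm {C} HC {I} {X Q : InvSys C I} {e} (Hl : is_level X Q e) {i i' : I} (a : Hom i i') :
  comp (e i) (comp (smap X a) (kp1 HC X Q e i')) = comp (e i) (comp (smap X a) (kp2 HC X Q e i')).
Proof.
  rewrite !comp_assoc, <- Hl. rassoc. rewrite (proj1 (kp_pb HC X Q e i')). reflexivity.
Qed.

Definition tmap {C} HC {I} {X Q : InvSys C I} {e} (Hl : is_level X Q e) {i i' : I} (a : Hom i i') :
  Hom (kpO HC X Q e i') (kpO HC X Q e i) :=
  proj1_sig (constructive_indefinite_description _
     (proj2 (kp_pb HC X Q e i) _ _ _ (kp_comm HC Hl a))).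

Lemma tmap_spec {C} HC {I} {X Q : InvSys C I} {e} (Hl : is_level X Q e) {i i' : I} (a : Hom i i') :
  (comp (kp1 HC X Q e i) (tmap HC Hl a) = comp (smap X a) (kp1 HC X Q e i') /\
   comp (kp2 HC X Q e i) (tmap HC Hl a) = comp (smap X a) (kp2 HC X Q e i')) /\
  forall h', comp (kp1 HC X Q e i) h' = comp (smap X a) (kp1 HC X Q e i') ->
             comp (kp2 HC X Q e i) h' = comp (smap X a) (kp2 HC X Q e i') ->
             h' = tmap HC Hl a.
Proof. exact (proj2_sig (constructive_indefinite_description _
     (proj2 (kp_pb HC X Q e i) _ _ _ (kp_comm HC Hl a)))). Qed.

Lemma tmap_id {C} HC {I} {X Q : InvSys C I} {e} (Hl : is_level X Q e) (i : I) :
  tmap HC Hl (idm i) = idm _.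
Proof.
  symmetry. apply (proj2 (tmap_spec HC Hl (idm i))); rewrite smap_id, comp_id_l, comp_id_r; reflexivity.
Qed.

Lemma tmap_comp {C} HC {I} {X Q : InvSys C I} {e} (Hl : is_level X Q e) {i i' i'' : I}
  (a : Hom i i') (b : Hom i' i'') :
  tmap HC Hl (comp b a) = comp (tmap HC Hl a) (tmap HC Hl b).
Proof.
  symmetry. destruct (tmap_spec HC Hl a) as [[A1 A2] _].
  destruct (tmap_spec HC Hl b) as [[B1 B2] _].
  apply (proj2 (tmap_spec HC Hl (comp b a))); rewrite smap_comp, !comp_assoc.
  - rewrite A1. rassoc. rewrite B1. reflexivity.
  - rewrite A2. rassoc. rewrite B2. reflexivity.
Qed.

Definition kpSys {C} HC {I} {X Q : InvSys C I} {e} (Hl : is_level X Q e) : InvSys C I :=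
  {| sobj := kpO HC X Q e; smap := fun i i' a => tmap HC Hl a;
     smap_id := tmap_id HC Hl; smap_comp := fun i i' i'' => @tmap_comp C HC I X Q e Hl i i' i'' |}.

Lemma kp1_level {C} HC {I} {X Q : InvSys C I} {e} (Hl : is_level X Q e) :
  is_level (kpSys HC Hl) X (kp1 HC X Q e).
Proof. intros i i' a. cbn. symmetry. exact (proj1 (proj1 (tmap_spec HC Hl a))). Qed.
Lemma kp2_level {C} HC {I} {X Q : InvSys C I} {e} (Hl : is_level X Q e) :
  is_level (kpSys HC Hl) X (kp2 HC X Q e).
Proof. intros i i' a. cbn. symmetry. exact (proj2 (proj1 (tmap_spec HC Hl a))). Qed.

Lemma cancel_e {C I} (HI : is_filtered I) (X Q : InvSys C I) (e : forall i, Hom (X i) (Q i))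
  (Hl : is_level X Q e)
  (Hepi : forall i z (x y : Hom (Q i) z), comp x (e i) = comp y (e i) -> x = y)
  (Z : C) (p q : colim_rep (mkPro HI Q) Z) :
  colim_eq (X := mkPro HI X) (existT _ (projT1 p) (comp (projT2 p) (e (projT1 p))))
           (existT _ (projT1 q) (comp (projT2 q) (e (projT1 q)))) ->
  colim_eq p q.
Proof.
  intros [m [a [b H]]]. exists m, a, b. cbn in *.
  apply (Hepi m). rassoc. rewrite !Hl. rewrite !comp_assoc. exact H.
Qed.

Lemma level_regepi {C} (HC : is_regular_category C) {I} (HI : is_filtered I)
  (X Q : InvSys C I) (e : forall i, Hom (X i) (Q i)) (Hl : is_level X Q e)
  (He : forall i, is_regular_epi (e i)) : pro_is_regular_epi (level_pro HI X Q e).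
Proof.
  assert (Hco : forall i, is_coequalizer (kp1 HC X Q e i) (kp2 HC X Q e i) (e i)).
  { intro i. apply regepi_kp; [apply He | apply kp_pb]. }
  assert (Hepi : forall i z (x y : Hom (Q i) z), comp x (e i) = comp y (e i) -> x = y).
  { intro i. apply (coeq_epi (Hco i)). }
  split; [apply level_is_pro; exact Hl|].
  exists (mkPro HI (kpSys HC Hl)), (level_pro HI (kpSys HC Hl) X (kp1 HC X Q e)),
         (level_pro HI (kpSys HC Hl) X (kp2 HC X Q e)).
  split; [apply level_is_pro, kp1_level|].
  split; [apply level_is_pro, kp2_level|].
  split.
  { intro j. unfold pro_comp, level_pro; cbn. rewrite (proj1 (kp_pb HC X Q e j)). apply colim_eq_refl. }
  intros Z g Hg Hgq.
  assert (H : forall j : pI Z, exists hj : colim_rep (mkPro HI Q) (psys Z j),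
     exists c : Hom (projT1 (g j)) (projT1 hj),
       comp (projT2 hj) (e (projT1 hj)) = comp (projT2 (g j)) (smap X c)).
  { intro j. specialize (Hgq j). unfold pro_comp, level_pro in Hgq; cbn in Hgq.
    destruct (colim_eq_equalize (X := mkPro HI (kpSys HC Hl)) Hgq) as [k [c Hc]].
    cbn in Hc. repeat rewrite <- comp_assoc in Hc.
    rewrite (proj1 (proj1 (tmap_spec HC Hl c))), (proj2 (proj1 (tmap_spec HC Hl c))) in Hc.
    rewrite !comp_assoc in Hc.
    destruct (proj2 (Hco k) _ _ Hc) as [h [Hh _]].
    exists (existT _ k h), c. exact Hh. }
  pose (h := fun j => proj1_sig (constructive_indefinite_description _ (H j))).
  assert (hs : forall j, exists c : Hom (projT1 (g j)) (projT1 (h j)),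
       comp (projT2 (h j)) (e (projT1 (h j))) = comp (projT2 (g j)) (smap X c)).
  { intro j. exact (proj2_sig (constructive_indefinite_description _ (H j))). }
  clearbody h.
  assert (hg : forall j, colim_eq (X := mkPro HI X)
     (existT _ (projT1 (h j)) (comp (projT2 (h j)) (e (projT1 (h j))))) (g j)).
  { intro j. destruct (hs j) as [c Hc]. rewrite Hc.
    exact (colim_eq_smap (X := mkPro HI X) c (projT2 (g j))). }
  exists (h : ProHom (mkPro HI Q) Z). split; [|split].
  - intros j j' b. apply (@cancel_e _ _ HI X Q e Hl Hepi). cbn.
    destruct (hs j') as [c Hc].
    eapply colim_eq_trans; [|apply colim_eq_sym, hg].
    eapply colim_eq_trans; [|apply (Hg j j' b)].
    assert (E : comp (comp (smap (psys Z) b) (projT2 (h j'))) (e (projT1 (h j')))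
               = comp (smap (psys Z) b) (comp (projT2 (g j')) (smap X c))).
    { rewrite <- Hc. symmetry. apply comp_assoc. }
    eapply colim_eq_trans; [apply colim_eq_of_eq; exact E|].
    exact (colim_eq_post (X := mkPro HI X) (smap (psys Z) b)
             (colim_eq_smap (X := mkPro HI X) c (projT2 (g j')))).
  - intro j. exact (hg j).
  - intros h' _ Hh' j. apply (@cancel_e _ _ HI X Q e Hl Hepi).
    eapply colim_eq_trans; [exact (Hh' j)|]. apply colim_eq_sym, hg.
Qed.

Theorem mainTheorem1 (C : Category) (HC : is_regular_category C)
    (I : Category) (HI : is_filtered I) (X Y : InvSys C I)
    (f : forall i : I, Hom (X i) (Y i)) (Hf : is_level X Y f) :
  (forall (Im : InvSys C I)
          (e : forall i : I, Hom (X i) (Im i)) (m : forall i : I, Hom (Im i) (Y i)),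
      is_level X Im e -> is_level Im Y m ->
      (forall i, is_regular_epi (e i) /\ is_mono (m i) /\ comp (m i) (e i) = f i) ->
      pro_is_regular_epi (level_pro HI X Im e) /\
      pro_is_mono (level_pro HI Im Y m) /\
      pro_eq (pro_comp (level_pro HI Im Y m) (level_pro HI X Im e))
             (level_pro HI X Y f)) /\
  ((forall i, is_regular_epi (f i)) -> pro_is_regular_epi (level_pro HI X Y f)).
Proof.
  split.
  - intros Im e m Hle Hlm Hall.
    split; [apply (level_regepi HC HI X Im e Hle); intro i; apply Hall|].
    split; [apply level_mono; [exact Hlm | intro i; apply Hall]|].
    intro j. unfold pro_comp, level_pro; cbn. rewrite (proj2 (proj2 (Hall j))).
    apply colim_eq_refl.
  - intro H. exact (level_regepi HC HI X Y f Hf H).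
Qed.
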